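(* Consider the setting described in the context, and assume $\operatorname{supp}(f_{(0,0)})=\mathcal{U}$. Fix a radius $r>0$. Then there exists a constant $\delta_r>0$, depending on $\operatorname{diam}(\mathcal{U}),\sigma,d,f_{(0,0)}$ (and not on $n$ or $k$), such that for all $n\in\mathbb{N}_0$ and all $k\in\{0,\dots,\bar k\}$, $$f_{(n,k)}\big(B_r(u^*_{(n)})\big)\ge\delta_r .$$
   Context: Setting: $d,m\ge1$; $\mathcal{X}\subseteq\mathbb{R}^m$; $u_{\min}<u_{\max}$ in $\mathbb{R}^d$ (componentwise) and $\mathcal{U}=\{u\in\mathbb{R}^d:u_{\min}\le u\le u_{\max}\}$; $\operatorname{proj}_{\mathcal{U}}(v)=\operatorname{argmin}_{u\in\mathcal{U}}|u-v|$. The transition map is $\Phi(x,u)=\Phi_s(x)+F_cu$ with $\Phi_s:\mathcal{X}\to\mathcal{X}$, $F_c\in\mathbb{R}^{m\times d}$, $\nu>0$, and $A=F_c^\top F_c+\nu I_d$ of full rank. A reference $x^{\mathrm{ref}}(t_n)\in\mathcal{X}$ is given at times $t_n=n\Delta t$. For a state $x_{(n)}\in\mathcal{X}$, $L_n(u)=|\Phi_s(x_{(n)})+F_cu-x^{\mathrm{ref}}(t_{n+1})|^2+\nu|u|^2$ and $u^*_{(n)}$ is its unique minimizer over $\mathcal{U}$. For a probability measure $f$ on $\mathbb{R}^d$ and $\alpha>0$, $m^\alpha_{L_n}[f]=\int u e^{-\alpha L_n(u)}f(du)/\int e^{-\alpha L_n(u)}f(du)$. Parameters: $\alpha,\lambda,\sigma,\tau>0$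 with $\lambda\tau\in(0,1)$, $\bar k\in\mathbb{N}$. Mean-field MPC–CBO dynamics: given $x_{(0)}\in\mathcal{X}$ and a probability measure $f_{(0,0)}$ on $\mathbb{R}^d$, for each $n\in\mathbb{N}_0$ and $k=0,\dots,\bar k-1$ let $f_{(n,k+1)}$ be the law of $\operatorname{proj}_{\mathcal{U}}\big(\bar U+\lambda\tau(m^\alpha_{L_n}[f_{(n,k)}]-\bar U)+\sigma\sqrt\tau\,\theta\big)$, where $\bar U\sim f_{(n,k)}$ and $\theta\sim\mathcal{N}(0,I_d)$ are independent; then $u_{(n)}=m^\alpha_{L_n}[f_{(n,\bar k)}]$, $x_{(n+1)}=\Phi_s(x_{(n)})+F_cu_{(n)}$, and $f_{(n+1,0)}=f_{(n,\bar k)}$. $B_r(v)$ denotes the Euclidean ball of radius $r$ about $v$. *)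

(* Defs.v *)
From HB Require Import structures.
From mathcomp Require Import all_boot all_order all_algebra.
From mathcomp Require Import all_classical all_reals all_analysis.
Set Implicit Arguments. Unset Strict Implicit. Unset Printing Implicit Defensive.
Import Order.TTheory GRing.Theory Num.Theory.
Local Open Scope classical_set_scope.
Local Open Scope ring_scope.

Section Defs.
Context {R : realType}.

(* vectors of R^n are represented as n.-tuple R (which carries the product
   Borel sigma-algebra in MathComp-Analysis) *)
Definition vadd n (u v : n.-tuple R) : n.-tuple R :=
  [tuple tnth u i + tnth v i | i < n].
Definition vscale n (a : R) (u : n.-tuple R) : n.-tuple R :=
  [tuple a * tnth u i | i < n].
Definition vsub n (u v : n.-tuple R) : n.-tuple R := vadd u (vscale (-1) v).
Definition vzero n : n.-tuple R := [tuple 0 | i < n].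

Definition vnorm2 n (u : n.-tuple R) : R := \sum_(i < n) tnth u i ^+ 2.
Definition vnorm n (u : n.-tuple R) : R := Num.sqrt (vnorm2 u).

Definition mxv m d (F : 'M[R]_(m, d)) (u : d.-tuple R) : m.-tuple R :=
  [tuple \sum_(j < d) F i j * tnth u j | i < m].

Definition box d (umin umax : d.-tuple R) : set (d.-tuple R) :=
  [set u | forall i, tnth umin i <= tnth u i <= tnth umax i].

Definition eball n (v : n.-tuple R) (r : R) : set (n.-tuple R) :=
  [set u | vnorm (vsub u v) < r].

Definition argmin_on n (S : set (n.-tuple R)) (L : n.-tuple R -> R) : n.-tuple R :=
  xget (vzero n) [set u | S u /\ forall w, S w -> L u <= L w].

Definition projU d (U : set (d.-tuple R)) (v : d.-tuple R) : d.-tuple R :=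
  argmin_on U (fun u => vnorm (vsub u v)).

Definition supp n (mu : set (n.-tuple R) -> \bar R) : set (n.-tuple R) :=
  [set u | forall e : R, 0 < e -> (0 < mu (eball u e))%E].

Definition Lcost m d (Phis : m.-tuple R -> m.-tuple R) (Fc : 'M[R]_(m, d))
  (nu : R) (x xr : m.-tuple R) (u : d.-tuple R) : R :=
  vnorm2 (vsub (vadd (Phis x) (mxv Fc u)) xr) + nu * vnorm2 u.

Definition consensus d (L : d.-tuple R -> R) (alpha : R)
  (f : set (d.-tuple R) -> \bar R) : d.-tuple R :=
  [tuple fine (\int[f]_u ((tnth u i * expR (- alpha * L u))%:E)) /
         fine (\int[f]_u (expR (- alpha * L u))%:E) | i < d].

Definition cbo_step d (U : set (d.-tuple R)) (lambda tau sigma : R)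
  (mc u theta : d.-tuple R) : d.-tuple R :=
  projU U (vadd (vadd u (vscale (lambda * tau) (vsub mc u)))
                (vscale (sigma * Num.sqrt tau) theta)).

(* G is the standard Gaussian N(0, I_d) on R^d: independent N(0,1) coordinates *)
Definition std_gaussian d (G : set (d.-tuple R) -> \bar R) : Prop :=
  forall A : 'I_d -> set R, (forall i, measurable (A i)) ->
    G [set t | forall i, A i (tnth t i)] = (\prod_(i < d) normal_prob 0 1 (A i))%E.

End Defs.

(* Main.v *)
Require Import Defs.
From HB Require Import structures.
From mathcomp Require Import all_boot all_order all_algebra.
From mathcomp Require Import all_classical all_reals all_analysis.
From mathcomp Require Import measurable_realfun.
From mathcomp Require Import ring lra.
Set Implicit Arguments. Unset Strict Implicit. Unset Printing Implicit Defensive.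
Import numFieldTopology.Exports numFieldNormedType.Exports.
Import Order.TTheory GRing.Theory Num.Theory.
Local Open Scope classical_set_scope.
Local Open Scope ring_scope.
Section P1.
Context {R : realType}.
Implicit Types (n : nat).

Lemma tnth_vadd n (u v : n.-tuple R) i : tnth (vadd u v) i = tnth u i + tnth v i.
Proof. by rewrite /vadd tnth_mktuple. Qed.
Lemma tnth_vscale n (a : R) (u : n.-tuple R) i : tnth (vscale a u) i = a * tnth u i.
Proof. by rewrite /vscale tnth_mktuple. Qed.
Lemma tnth_vsub n (u v : n.-tuple R) i : tnth (vsub u v) i = tnth u i - tnth v i.
Proof. by rewrite /vsub tnth_vadd tnth_vscale mulN1r. Qed.
Lemma tnth_mxv m d (F : 'M[R]_(m, d)) (u : d.-tuple R) i :
  tnth (mxv F u) i = \sum_(j < d) F i j * tnth u j.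
Proof. by rewrite /mxv tnth_mktuple. Qed.

Lemma vnorm2_ge0 n (u : n.-tuple R) : 0 <= vnorm2 u.
Proof. by apply: sumr_ge0 => i _; exact: sqr_ge0. Qed.

Lemma eballE n (v t : n.-tuple R) r : 0 < r ->
  eball v r t <-> vnorm2 (vsub t v) < r ^+ 2.
Proof.
move=> r0; rewrite /eball /vnorm /=.
rewrite -{1}(@ger0_norm _ r) ?ltW// -sqrtr_sqr ltr_sqrt ?exprn_gt0//.
Qed.

Definition clamp (a b x : R) := Num.max a (Num.min b x).

Lemma clamp_in a b x : a <= b -> a <= clamp a b x <= b.
Proof.
move=> ab; rewrite /clamp le_max lexx /= ge_max ab /= ge_min lexx //.
Qed.

Lemma clamp_min a b x w : a <= b -> a <= w <= b ->
  (clamp a b x - x) ^+ 2 <= (w - x) ^+ 2 /\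
  ((w - x) ^+ 2 <= (clamp a b x - x) ^+ 2 -> w = clamp a b x).
Proof.
move=> ab /andP[aw wb]; rewrite /clamp.
have [xa|ax] := boolP (x < a).
  have -> : Num.min b x = x by apply/min_idPr; lra.
  have -> : Num.max a x = a by apply/max_idPl; lra.
  split; first by nra.
  move=> h; nra.
have [xb|bx] := boolP (x < b).
  have -> : Num.min b x = x by apply/min_idPr; exact: ltW.
  have -> : Num.max a x = x by apply/max_idPr; rewrite leNgt.
  split; first by rewrite subrr expr0n /= sqr_ge0.
  by rewrite subrr expr0n /= => h; apply/eqP; rewrite -subr_eq0 -sqrf_eq0 eq_le h sqr_ge0.
have -> : Num.min b x = b by apply/min_idPl; rewrite leNgt.
have -> : Num.max a b = b by apply/max_idPr.
have : b <= x by rewrite leNgt.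
move=> bx'; split; first by nra.
move=> h; nra.
Qed.

Definition clampt n (a b v : n.-tuple R) : n.-tuple R :=
  [tuple clamp (tnth a i) (tnth b i) (tnth v i) | i < n].

Lemma projU_box n (a b v : n.-tuple R) : (forall i, tnth a i <= tnth b i) ->
  projU (box a b) v = clampt a b v.
Proof.
move=> ab; rewrite /projU /argmin_on.
have cbox : box a b (clampt a b v).
  by move=> i; rewrite /clampt tnth_mktuple; exact: clamp_in.
have cmin : forall w, box a b w -> vnorm2 (vsub (clampt a b v) v) <= vnorm2 (vsub w v).
  move=> w wb; apply: ler_sum => i _; rewrite !tnth_vsub /clampt tnth_mktuple.
  exact: (clamp_min _ (ab i) (wb i)).1.
apply: xget_unique.
  split => // w wb; rewrite /vnorm ler_sqrt ?vnorm2_ge0//; exact: cmin.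
move=> y [yb ymin]; have := ymin _ cbox; rewrite /vnorm ler_sqrt ?vnorm2_ge0// => h.
have h2 : vnorm2 (vsub y v) = vnorm2 (vsub (clampt a b v) v).
  by apply/eqP; rewrite eq_le h cmin.
have : \sum_(i < n) ((tnth (vsub y v) i) ^+ 2 - (tnth (vsub (clampt a b v) v) i) ^+ 2) = 0.
  by rewrite sumrB -/(vnorm2 _) -/(vnorm2 _) h2 subrr.
have hnn : forall j : 'I_n, true -> 0 <= (tnth (vsub y v) j) ^+ 2 - (tnth (vsub (clampt a b v) v) j) ^+ 2.
  move=> j _; rewrite !tnth_vsub /clampt tnth_mktuple subr_ge0.
  exact: (clamp_min _ (ab j) (yb j)).1.
move=> E; have H := psumr_eq0P hnn E.
apply: eq_from_tnth => i.
have := H i isT; rewrite !tnth_vsub /clampt tnth_mktuple.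
have [c1 c2] := clamp_min (tnth v i) (ab i) (yb i).
move=> e; apply: c2; move: e => /eqP; rewrite subr_eq0 => /eqP ->; exact: lexx.
Qed.

End P1.
Section P2.
Context {R : realType}.
Local Notation mfD := measurable_realfun.measurable_funD.
Local Notation mfM := measurable_realfun.measurable_funM.
Local Notation mfX := measurable_realfun.measurable_funX.
Local Notation mfB := measurable_realfun.measurable_funB.

Lemma mtn n (i : 'I_n) : measurable_fun setT (fun u : n.-tuple R => tnth u i).
Proof. exact: measurable_tnth. Qed.

Lemma m_vnorm2_sub n (v : n.-tuple R) :
  measurable_fun setT (fun t : n.-tuple R => vnorm2 (vsub t v)).
Proof.
rewrite /vnorm2.
have -> : (fun t : n.-tuple R => \sum_(i < n) tnth (vsub t v) i ^+ 2) =
   (fun t => \sum_(i <- enum 'I_n) (fun i t => (tnth t i - tnth v i) ^+ 2) i t).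
  by apply: funext => t; rewrite big_enum /=; apply: eq_bigr => i _; rewrite tnth_vsub.
apply: measurable_sum => i; apply: mfX; apply: mfB => //; exact: mtn.
Qed.

Lemma m_eball n (v : n.-tuple R) r : 0 < r -> measurable (eball v r).
Proof.
move=> r0.
have -> : eball v r = (fun t => vnorm2 (vsub t v)) @^-1` `]-oo, r ^+ 2[.
  apply/seteqP; split => t /=.
    by move/(eballE _ _ r0); rewrite in_itv.
  by rewrite in_itv /= => h; apply/(eballE _ _ r0).
rewrite -(setTI (_ @^-1` _)); apply: m_vnorm2_sub => //; exact: measurable_itv.
Qed.

Lemma m_prodset n (A : 'I_n -> set R) : (forall i, measurable (A i)) ->
  measurable [set t : n.-tuple R | forall i, A i (tnth t i)].
Proof.
move=> mA.
have -> : [set t : n.-tuple R | forall i, A i (tnth t i)] =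
   \bigcap_(i in [set: 'I_n]) ((fun t : n.-tuple R => tnth t i) @^-1` A i).
  by apply/seteqP; split => t /= h i => [_|]; apply: h.
apply: fin_bigcap_measurable => // i _.
rewrite -(setTI (_ @^-1` _)); exact: mtn.
Qed.

Lemma m_box n (a b : n.-tuple R) : measurable (box a b).
Proof.
have -> : box a b = [set t : n.-tuple R | forall i, (`[tnth a i, tnth b i]%classic : set R) (tnth t i)].
  by apply/seteqP; split => t /= h i; [rewrite in_itv /=; exact: h|
     have := h i; rewrite /= in_itv].
exact: (m_prodset (fun i => measurable_itv `[tnth a i, tnth b i])).
Qed.

Lemma m_Lcost m d (Phis : m.-tuple R -> m.-tuple R) (Fc : 'M[R]_(m, d)) nu x xr :
  measurable_fun setT (Lcost Phis Fc nu x xr).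
Proof.
rewrite /Lcost.
apply: mfD; last first.
  apply: mfM => //; rewrite /vnorm2.
  have -> : (fun t : d.-tuple R => \sum_(i < d) tnth t i ^+ 2) =
     (fun t => \sum_(i <- enum 'I_d) (fun i t => (tnth t i) ^+ 2) i t).
    by apply: funext => t; rewrite big_enum.
  apply: measurable_sum => i; apply: mfX; exact: mtn.
rewrite /vnorm2.
have -> : (fun t : d.-tuple R => \sum_(i < m) tnth (vsub (vadd (Phis x) (mxv Fc t)) xr) i ^+ 2) =
   (fun t => \sum_(i <- enum 'I_m) (fun i t => (tnth (Phis x) i +
        \sum_(j <- enum 'I_d) (fun j t => Fc i j * tnth t j) j t - tnth xr i) ^+ 2) i t).
  apply: funext => t; rewrite big_enum /=; apply: eq_bigr => i _.
  by rewrite tnth_vsub tnth_vadd tnth_mxv big_enum.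
apply: measurable_sum => i; apply: mfX; apply: mfB => //; apply: mfD => //.
apply: measurable_sum => j; apply: mfM => //; exact: mtn.
Qed.

End P2.
Section P3.
Context {R : realType}.

Lemma cont_sum (T : topologicalType) I (s : seq I) (h : I -> T -> R^o) :
  (forall i, continuous (h i)) -> continuous (fun x => \sum_(i <- s) h i x).
Proof.
move=> hc; elim: s => [|a s IH] /=.
  under eq_fun do rewrite big_nil; exact: cst_continuous.
under eq_fun do rewrite big_cons.
move=> x; exact: (@continuousD _ R^o _ (h a) (fun x => \sum_(i <- s) h i x) x (hc a x) (IH x)).
Qed.

Lemma cont_M (T : topologicalType) (f g : T -> R^o) :
  continuous f -> continuous g -> continuous (fun x => f x * g x).
Proof. move=> fc gc x; apply: cvgM; [exact: fc|exact: gc]. Qed.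

Lemma cont_D (T : topologicalType) (f g : T -> R^o) :
  continuous f -> continuous g -> continuous (fun x => f x + g x).
Proof. move=> fc gc x; exact: (@continuousD _ R^o _ f g x (fc x) (gc x)). Qed.

Lemma argmin_in_box m d (Phis : m.-tuple R -> m.-tuple R) (Fc : 'M[R]_(m, d)) nu x xr
  (a b : d.-tuple R) : (forall i, tnth a i <= tnth b i) ->
  box a b (argmin_on (box a b) (Lcost Phis Fc nu x xr)).
Proof.
move=> ab.
pose phi (v : 'rV[R]_d) : d.-tuple R := [tuple v ord0 i | i < d].
pose g := Lcost Phis Fc nu x xr \o phi.
pose A := [set v : 'rV[R]_d | forall i, (`[tnth a i, tnth b i]%classic : set R) (v ord0 i)].
have cA : compact A.
  apply: (@rV_compact _ d (fun i => `[tnth a i, tnth b i]%classic)) => i; exact: segment_compact.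
have A0 : A !=set0.
  exists (\row_i tnth a i) => i /=; rewrite mxE in_itv /= lexx; exact: ab.
have gc : continuous g.
  have -> : g = (fun v : 'rV[R]_d =>
     \sum_(i <- enum 'I_m) (fun i v => (tnth (Phis x) i +
        \sum_(j <- enum 'I_d) (fun j (v : 'rV[R]_d) => Fc i j * v ord0 j) j v - tnth xr i) *
        (tnth (Phis x) i +
        \sum_(j <- enum 'I_d) (fun j (v : 'rV[R]_d) => Fc i j * v ord0 j) j v - tnth xr i)) i v
     + nu * \sum_(i <- enum 'I_d) (fun i (v : 'rV[R]_d) => v ord0 i * v ord0 i) i v).
    apply: funext => v; rewrite /g /= /Lcost /vnorm2 !big_enum /=; congr (_ + _ * _).
      apply: eq_bigr => i _; rewrite tnth_vsub tnth_vadd tnth_mxv big_enum /= expr2.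
      by congr (_ * _); congr (_ + _ - _); apply: eq_bigr => j _; rewrite /phi tnth_mktuple.
    by apply: eq_bigr => i _; rewrite /phi tnth_mktuple expr2.
  apply: cont_D; last first.
    apply: cont_M; first exact: cst_continuous.
    apply: cont_sum => i; apply: cont_M; exact: coord_continuous.
  apply: cont_sum => i.
  have hc : continuous (fun v : 'rV[R]_d => tnth (Phis x) i +
        \sum_(j <- enum 'I_d) (fun j (v : 'rV[R]_d) => Fc i j * v ord0 j) j v - tnth xr i).
    apply: cont_D; last exact: cst_continuous.
    apply: cont_D; first exact: cst_continuous.
    apply: cont_sum => j; apply: cont_M; [exact: cst_continuous|exact: coord_continuous].
  exact: cont_M.
have [c cA' cmin] := compact_EVT_min A0 cA (continuous_subspaceT gc).
rewrite inE in cA'.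
rewrite /argmin_on.
set P := [set u | box a b u /\ forall w, box a b w -> Lcost Phis Fc nu x xr u <= Lcost Phis Fc nu x xr w].
suff [h _] : P (xget (vzero d) P) by exact: h.
apply: xgetPex.
exists (phi c); split.
  by move=> i; rewrite /phi tnth_mktuple; have := cA' i; rewrite /= in_itv.
move=> w wb.
have -> : w = phi (\row_i tnth w i).
  by apply: eq_from_tnth => i; rewrite /phi tnth_mktuple mxE.
apply: (cmin (\row_i tnth w i)); rewrite inE => i /=; rewrite mxE in_itv /=; exact: wb.
Qed.

End P3.
Section P4.
Context {R : realType}.
Local Notation mfM := measurable_realfun.measurable_funM.
Local Open Scope ereal_scope.

Lemma consensus_bound d (U : set (d.-tuple R)) (mU : measurable U)
  (f : probability (d.-tuple R) R) (L : d.-tuple R -> R) (alpha : R) (B : 'I_d -> R) :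
  f (~` U) = 0 -> measurable_fun setT L ->
  (forall u, U u -> forall i, (`|tnth u i| <= B i)%R) -> (forall i, (0 <= B i)%R) ->
  forall i, (`|tnth (consensus L alpha f) i| <= B i)%R.
Proof.
move=> fU mL UB B0 i; rewrite /consensus tnth_mktuple.
set w := fun u => expR (- alpha * L u).
have mw : measurable_fun setT w.
  apply: measurableT_comp; first exact: measurable_realfun.measurable_expR.
  exact: (mfM (measurable_cst (- alpha)%R) mL).
have mwE : measurable_fun setT (fun u => (w u)%:E).
  exact: (proj2 (measurable_realfun.measurable_EFinP setT w) mw).
have mNi : measurable_fun setT (fun u : d.-tuple R => (tnth u i * w u)%R).
  exact: mfM (measurable_tnth i) mw.
set D := \int[f]_u (w u)%:E.
set N := \int[f]_u (tnth u i * w u)%:E.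
have D0 : 0 <= D by apply: integral_ge0 => u _; rewrite lee_fin expR_ge0.
have [fD0|fD0] := eqVneq (fine D) 0%R.
  by rewrite fD0 invr0 mulr0 normr0.
have Dfin : D \is a fin_num.
  by move: fD0; case: (D) => [r| |] //=; rewrite eqxx.
have fDpos : (0 < fine D)%R.
  by rewrite lt_neqAle eq_sym fD0 /= fine_ge0.
rewrite normrM normfV (gtr0_norm fDpos) ler_pdivrMr //.
have [Nfin|Nnfin] := boolP (N \is a fin_num); last first.
  have -> : fine N = 0%R by move: Nnfin; case: (N).
  by rewrite normr0 mulr_ge0 // ltW.
have h1 : `|N| <= \int[f]_u `|(tnth u i * w u)%:E|.
  apply: le_abse_integral => //; exact: (proj2 (measurable_realfun.measurable_EFinP setT _) mNi).
have h2 : \int[f]_u `|(tnth u i * w u)%:E| <= \int[f]_u ((B i)%:E * (w u)%:E).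
  apply: ae_ge0_le_integral => //.
  - apply: measurableT_comp => //; exact: (proj2 (measurable_realfun.measurable_EFinP setT _) mNi).
  - by move=> u _; rewrite -EFinM lee_fin mulr_ge0 ?expR_ge0.
  - by apply: emeasurable_funM => //; exact: measurable_cst.
  - exists (~` U); split => //; first exact: measurableC.
    move=> u /= h Uu; apply: h => _.
    rewrite -EFinM lee_fin normrM (ger0_norm (expR_ge0 _)) ler_wpM2r ?expR_ge0 //.
    exact: UB.
have h3 : \int[f]_u ((B i)%:E * (w u)%:E) = (B i)%:E * D.
  by rewrite ge0_integralZl_EFin // => u _; rewrite lee_fin expR_ge0.
rewrite h3 in h2; have := le_trans h1 h2.
rewrite -(fineK Nfin) -(fineK Dfin) -EFinM /= lee_fin.
by rewrite mulrC.
Qed.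

End P4.
Section P5.
Context {R : realType}.
Local Open Scope ereal_scope.

Lemma le_int_nm d (T : measurableType d) (mu : {measure set T -> \bar R}) D (f g : T -> \bar R) :
  (forall x, D x -> 0 <= f x) -> (forall x, D x -> f x <= g x) ->
  \int[mu]_(x in D) f x <= \int[mu]_(x in D) g x.
Proof.
move=> f0 fg.
have g0 : forall x, D x -> 0 <= g x by move=> x Dx; exact: le_trans (f0 _ Dx) (fg _ Dx).
rewrite !ge0_integralE //.
apply: le_ereal_sup => _ [h /= hf <-]; exists h => //= x.
apply: le_trans (hf x) _. rewrite /patch; case: ifP => // /set_mem Dx; exact: fg.
Qed.

Lemma prode_lb n (F : 'I_n -> \bar R) (b : R) : (0 <= b)%R ->
  (forall i, b%:E <= F i) -> (b ^+ n)%:E <= \prod_(i < n) F i.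
Proof.
move=> b0; elim: n F => [|n IH] F hF; first by rewrite big_ord0 expr0.
rewrite big_ord_recr /= exprSr EFinM.
apply: lee_pmul.
- by rewrite lee_fin exprn_ge0.
- by rewrite lee_fin.
- exact: (IH (fun i => F (widen_ord (leqnSn n) i))).
- exact: hF.
Qed.

Lemma normal_itv_lb (M e : R) : (0 <= M)%R -> (0 < e)%R ->
  exists2 beta : R, (0 < beta)%R &
  forall a : R, (`|a| <= M)%R -> beta%:E <= normal_prob 0 1 `](a - e)%R, (a + e)%R[%classic.
Proof.
move=> M0 e0.
pose p0 : R := (normal_peak (1:R) * expR (- (M + e) ^+ 2 / 2))%R.
have p0pos : (0 < p0)%R by rewrite mulr_gt0 ?expR_gt0 // normal_peak_gt0 // oner_neq0.
exists (p0 * (e *+ 2))%R; first by rewrite mulr_gt0 // mulrn_wgt0.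
move=> a aM; rewrite /normal_prob.
have mA : measurable (`](a - e)%R, (a + e)%R[%classic : set R) by exact: measurable_itv.
apply: (@le_trans _ _ (\int[lebesgue_measure]_(x in `](a - e)%R, (a + e)%R[%classic) (cst p0%:E x))).
  rewrite integral_cst //.
  have := lebesgue_measure_itv `](a - e)%R, (a + e)%R[; rewrite /= ifT; last first.
    by rewrite lte_fin ltrD2l gtrN.
  move=> ->.
  rewrite -EFinB -EFinM lee_fin; apply: ler_wpM2l; first exact: ltW.
  by rewrite le_eqVlt; apply/orP; left; apply/eqP; rewrite mulr2n; lra.
apply: le_int_nm => x xA; first by rewrite lee_fin ltW.
rewrite /= lee_fin normal_pdfE ?oner_neq0 //.
apply: ler_wpM2l; first exact: normal_peak_ge0.
rewrite /normal_fun ler_expR expr1n subr0.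
move: xA; rewrite /= in_itv /= => /andP[x1 x2].
move: aM; rewrite ler_norml => /andP[a1 a2].
have hx : (x ^+ 2 <= (M + e) ^+ 2)%R.
  rewrite -ler_sqrt ?sqr_ge0 // !sqrtr_sqr; rewrite ler_norml; apply/andP; split.
    rewrite (ger0_norm); [lra|lra].
  rewrite (ger0_norm); [lra|lra].
lra.
Qed.

End P5.
Section P6.
Context {R : realType}.

Lemma clamp_lip (a b x y : R) : a <= y <= b -> `|clamp a b x - y| <= `|x - y|.
Proof.
move=> /andP[ay yb]; rewrite /clamp.
have [xa|ax] := boolP (x < a).
  have -> : Num.min b x = x by apply/min_idPr; lra.
  have -> : Num.max a x = a by apply/max_idPl; lra.
  rewrite !ler0_norm; lra.
have [xb|bx] := boolP (x < b).
  have -> : Num.min b x = x by apply/min_idPr; exact: ltW.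
  have -> : Num.max a x = x by apply/max_idPr; rewrite leNgt.
  exact: lexx.
have -> : Num.min b x = b by apply/min_idPl; rewrite leNgt.
have -> : Num.max a b = b by apply/max_idPr; lra.
rewrite !ger0_norm; lra.
Qed.

Lemma indic_le {T1 T2 : Type} (A : set T1) (B : set T2) x y :
  (A x -> B y) -> (\1_A x : R) <= \1_B y.
Proof.
move=> h; rewrite !indicE.
have [/set_mem /h /mem_set -> //|_] := boolP (x \in A).
by rewrite ler0n.
Qed.

Lemma indic_ge0 {T : Type} (A : set T) x : (0 : R) <= \1_A x.
Proof. by rewrite indicE ler0n. Qed.

Lemma sq_le_of_abs (z e : R) : `|z| <= e -> z ^+ 2 <= e ^+ 2.
Proof.
move=> h; have z0 := normr_ge0 z; rewrite -real_normK ?num_real //; nra.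
Qed.

Local Open Scope ereal_scope.

Lemma step_lb d (umin umax : d.-tuple R) (sigma tau r : R) :
  (0 < d)%N -> (forall i, (tnth umin i < tnth umax i)%R) ->
  (0 < sigma)%R -> (0 < tau)%R -> (0 < r)%R ->
  exists2 c0 : R, (0 < c0)%R &
  forall (lambda : R) (G f : probability (d.-tuple R) R) (mc ustar : d.-tuple R),
    (0 < lambda * tau < 1)%R -> std_gaussian G -> f (box umin umax) = 1 ->
    (forall i, (`|tnth mc i| <= `|tnth umin i| + `|tnth umax i|)%R) ->
    box umin umax ustar ->
    c0%:E <= \int[f]_u \int[G]_th
       (\1_(eball ustar r) (cbo_step (box umin umax) lambda tau sigma mc u th))%:E.
Proof.
move=> d0 ult s0 t0 r0.
pose B (i : 'I_d) := (`|tnth umin i| + `|tnth umax i|)%R.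
pose Bm := (\sum_(i < d) B i)%R.
have BBm : forall i, (B i <= Bm)%R.
  move=> i; rewrite /Bm (bigD1 i) //= lerDl; apply: sumr_ge0 => j _.
  by rewrite /B addr_ge0.
have B0 : forall i, (0 <= B i)%R by move=> i; rewrite /B addr_ge0.
have Bm0 : (0 <= Bm)%R by apply: sumr_ge0 => i _.
pose s := (sigma * Num.sqrt tau)%R.
have spos : (0 < s)%R by rewrite mulr_gt0 // sqrtr_gt0.
pose eps := (r / (d%:R + 1))%R.
have d1 : (0 < d%:R + 1 :> R)%R by rewrite ltr_pwDr // ler0n.
have epos : (0 < eps)%R by rewrite divr_gt0.
have deps : (d%:R * eps ^+ 2 < r ^+ 2)%R.
  rewrite /eps expr_div_n mulrA ltr_pdivrMr ?exprn_gt0 //.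
  have dd : (d%:R < (d%:R + 1) ^+ 2 :> R)%R.
    have dg : (0 <= d%:R :> R)%R by rewrite ler0n.
    nra.
  rewrite mulrC ltr_pM2l ?exprn_gt0 //.
pose M := (2 * Bm / s)%R.
have M0 : (0 <= M)%R by rewrite /M divr_ge0 ?mulr_ge0 // ltW.
have [beta beta0 hbeta] := normal_itv_lb M0 (divr_gt0 epos spos).
exists (beta ^+ d)%R; first exact: exprn_gt0.
move=> lambda G f mc ustar /andP[lt0 lt1] hG fU mcB ustarU.
have ab : forall i, (tnth umin i <= tnth umax i)%R by move=> i; exact: ltW.
have inner : forall u, box umin umax u ->
    (beta ^+ d)%:E <= \int[G]_th
       (\1_(eball ustar r) (cbo_step (box umin umax) lambda tau sigma mc u th))%:E.
  move=> u uU.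
  pose c i := (tnth u i + lambda * tau * (tnth mc i - tnth u i))%R.
  pose a i := ((tnth ustar i - c i) / s)%R.
  pose A i := (`](a i - eps / s)%R, (a i + eps / s)%R[%classic : set R).
  have mA : forall i, measurable (A i) by move=> i; exact: measurable_itv.
  pose P := [set t : d.-tuple R | forall i, A i (tnth t i)].
  have mP : measurable P := m_prodset mA.
  have aM : forall i, (`|a i| <= M)%R.
    move=> i; rewrite /a normrM normfV (gtr0_norm spos) /M ler_pM2r ?invr_gt0 //.
    have h1 := uU i; have h2 := ustarU i; have h3 := mcB i.
    move: h1 h2 => /andP[h1 h1'] /andP[h2 h2'].
    move: h3; rewrite ler_norml => /andP[h3 h3'].
    have hB := BBm i.
    have hu : (`|tnth umin i| + `|tnth umax i| <= Bm)%R by exact: hB.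
    have n1 := ler_norm (tnth umin i); have n2 := ler_norm (tnth umax i).
    have n3 := ler_normr (tnth umin i) (- tnth umin i).
    have n1' : (- tnth umin i <= `|tnth umin i|)%R by rewrite -normrN ler_norm.
    have n2' : (- tnth umax i <= `|tnth umax i|)%R by rewrite -normrN ler_norm.
    rewrite ler_norml /c; apply/andP; split.
      have : (0 <= (1 - lambda * tau) * (tnth umax i - tnth u i))%R by apply: mulr_ge0; lra.
      have : (0 <= (lambda * tau) * (B i - tnth mc i))%R by apply: mulr_ge0; rewrite /B; lra.
      rewrite /B; nra.
    have : (0 <= (1 - lambda * tau) * (tnth u i - tnth umin i))%R by apply: mulr_ge0; lra.
    have : (0 <= (lambda * tau) * (tnth mc i + B i))%R by apply: mulr_ge0; rewrite /B; lra.
    rewrite /B; nra.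
  apply: (@le_trans _ _ (\int[G]_th (\1_P th)%:E)).
    rewrite integral_indic // setIT.
    have H : (beta ^+ d)%:E <= (\prod_(i < d) normal_prob 0 1 (A i))%E.
      apply: prode_lb; first exact: ltW.
      move=> i; exact: hbeta.
    exact: (eq_ind _ (fun z => (beta ^+ d)%:E <= z) H _ (esym (hG A mA))).
  apply: le_int_nm => th _; first by rewrite lee_fin indic_ge0.
  rewrite lee_fin; apply: indic_le => Pth.
  rewrite /cbo_step projU_box //.
  apply/(eballE _ _ r0); apply: le_lt_trans deps.
  have -> : (d%:R * eps ^+ 2 = \sum_(i < d) eps ^+ 2)%R.
    by rewrite sumr_const card_ord mulr_natl.
  rewrite /vnorm2; apply: ler_sum => i _; rewrite tnth_vsub /clampt tnth_mktuple.
  apply: sq_le_of_abs; apply: le_trans (clamp_lip _ (ustarU i)) _.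
  rewrite !tnth_vadd !tnth_vscale tnth_vsub.
  have := Pth i; rewrite /A /= in_itv /= => /andP[q1 q2].
  have e1 : (- (eps / s) < tnth th i - a i < eps / s)%R by apply/andP; split; lra.
  have e2 : (`|tnth th i - a i| <= eps / s)%R by rewrite ler_norml; apply/andP; split; lra.
  have -> : (tnth u i + lambda * tau * (tnth mc i - tnth u i) + sigma * Num.sqrt tau * tnth th i - tnth ustar i
      = s * (tnth th i - a i))%R.
    rewrite /a /c /s; field; by rewrite gt_eqF ?sqrtr_gt0 // gt_eqF.
  rewrite normrM (gtr0_norm spos) -ler_pdivlMl //.
  by rewrite mulrC.
have mU := m_box umin umax.
apply: (@le_trans _ _ (\int[f]_u ((beta ^+ d)%:E * (\1_(box umin umax) u)%:E))).
  have -> : \int[f]_u ((beta ^+ d)%:E * (\1_(box umin umax) u)%:E) =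
     (beta ^+ d)%:E * \int[f]_u (\1_(box umin umax) u)%:E.
    apply: ge0_integralZl_EFin => //.
    - exact: (proj2 (measurable_EFinP setT _) (measurable_indic mU)).
    - by rewrite ltW // exprn_gt0.
  have fU' : (f : {measure set (d.-tuple R) -> \bar R}) (box umin umax) = 1 := fU.
  by rewrite integral_indic // setIT fU' mule1.
apply: le_int_nm => u _.
  by rewrite -EFinM lee_fin mulr_ge0 ?indic_ge0 // ltW // exprn_gt0.
rewrite indicE; have [/set_mem uU|_] := boolP (u \in box umin umax).
  by rewrite /= mule1; exact: inner.
rewrite /= mule0; apply: integral_ge0 => th _; by rewrite lee_fin indic_ge0.
Qed.

End P6.
Section P7.
Context {R : realType}.

Lemma vnorm2_tri n (t q p : n.-tuple R) :
  vnorm2 (vsub t p) <= 2 * vnorm2 (vsub t q) + 2 * vnorm2 (vsub q p).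
Proof.
rewrite /vnorm2 !mulr_sumr -big_split /=; apply: ler_sum => i _.
rewrite !tnth_vsub.
have : 0 <= (tnth t i - 2 * tnth q i + tnth p i) ^+ 2 by exact: sqr_ge0.
nra.
Qed.

Lemma vnorm2_unif n (x : n.-tuple R) c : (forall i, `|tnth x i| <= c) ->
  vnorm2 x <= n%:R * c ^+ 2.
Proof.
move=> h; have -> : (n%:R * c ^+ 2 = \sum_(i < n) c ^+ 2).
  by rewrite sumr_const card_ord mulr_natl.
apply: ler_sum => i _; exact: sq_le_of_abs.
Qed.

Lemma vsub_sym n (x y : n.-tuple R) : vnorm2 (vsub x y) = vnorm2 (vsub y x).
Proof.
rewrite /vnorm2; apply: eq_bigr => i _; rewrite !tnth_vsub -sqrrN opprB //.
Qed.

Local Open Scope ereal_scope.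

Lemma supp_null d (umin umax : d.-tuple R) (f : probability (d.-tuple R) R) :
  supp f = box umin umax -> f (~` box umin umax) = 0.
Proof.
move=> hs.
pose mu : {measure set (d.-tuple R) -> \bar R} := f.
change (mu (~` box umin umax) = 0).
pose I := (d.-tuple rat * rat)%type.
pose tr (q : d.-tuple rat) : d.-tuple R := [tuple ratr (tnth q i) | i < d].
pose E (n : nat) : set (d.-tuple R) :=
  match (@unpickle I n) with
  | Some qr => if ((0 < ratr qr.2 :> R)%R && (mu (eball (tr qr.1) (ratr qr.2)) == 0))
               then eball (tr qr.1) (ratr qr.2) else set0
  | None => set0
  end.
have mE : forall n, measurable (E n).
  move=> n; rewrite /E; case: (unpickle n) => [qr|] //.
  by case: ifP => // /andP[h _]; exact: m_eball.
have fE : forall n, mu (E n) = 0.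
  move=> n; rewrite /E; case: (unpickle n) => [qr|]; last exact: measure0.
  by case: ifP => [/andP[_ /eqP]//|_]; exact: measure0.
have mS : measurable (~` box umin umax) by apply: measurableC; exact: m_box.
have sub : ~` box umin umax `<=` \bigcup_n E n.
  move=> p pS.
  have nsp : ~ supp f p by rewrite hs.
  have [e [e0 fe]] : exists e : R, (0 < e)%R /\ mu (eball p e) = 0.
    apply: contra_notP nsp => H e e0.
    rewrite lt0e measure_ge0 andbT; apply/negP => /eqP fe0.
    by apply: H; exists e.
  pose eta := (e / (4 * (d%:R + 1)))%R.
  have d1 : (0 < d%:R + 1 :> R)%R by rewrite ltr_pwDr // ler0n.
  have eta0 : (0 < eta)%R by rewrite divr_gt0 // mulr_gt0.
  have hq' : forall i : 'I_d, exists q : rat,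
      ratr q \in `](tnth p i - eta)%R, (tnth p i + eta)%R[.
    by move=> i; apply: rat_in_itvoo; lra.
  have [qf hq] := fin_all_exists hq'.
  have [rho hrho] : exists rho : rat, ratr rho \in `](e / 4)%R, (e / 2)%R[ by apply: rat_in_itvoo; lra.
  pose q : d.-tuple rat := [tuple qf i | i < d].
  pose qr : I := (q, rho).
  have trq : forall i, tnth (tr q) i = ratr (qf i).
    by move=> i; rewrite /tr /q !tnth_mktuple.
  move: hrho; rewrite in_itv /= => /andP[r1 r2].
  have rpos : (0 < ratr rho :> R)%R by lra.
  have dq : (vnorm2 (vsub (tr q) p) <= (e / 4) ^+ 2)%R.
    apply: (le_trans (vnorm2_unif (c := eta) _)).
      move=> i; rewrite tnth_vsub trq; have := hq i; rewrite in_itv /= ler_norml => /andP[a1 a2].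
      apply/andP; split; lra.
    rewrite /eta expr_div_n (expr_div_n e) mulrA ler_pdivrMr ?exprn_gt0 ?mulr_gt0 //.
    rewrite exprMn.
    have -> : (e ^+ 2 / 4 ^+ 2 * (4 ^+ 2 * (d%:R + 1) ^+ 2) = e ^+ 2 * (d%:R + 1) ^+ 2 :> R)%R.
      by field.
    have dg : (0 <= d%:R :> R)%R by rewrite ler0n.
    have X0 : (0 <= e ^+ 2)%R by exact: sqr_ge0.
    nra.
  have sub2 : eball (tr q) (ratr rho) `<=` eball p e.
    move=> t /(eballE _ _ rpos) ht; apply/(eballE _ _ e0).
    apply: (le_lt_trans (vnorm2_tri t (tr q) p)).
    have : (2 * (ratr rho) ^+ 2 + 2 * (e / 4) ^+ 2 < e ^+ 2)%R.
      have : ((ratr rho : R) ^+ 2 < (e / 2) ^+ 2)%R.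
        by rewrite ltr_pXn2r // ?nnegrE ltW // divr_gt0.
      have ee : (0 < e ^+ 2)%R by rewrite exprn_gt0.
      rewrite !expr_div_n; lra.
    nra.
  exists (pickle qr) => //.
  rewrite /E pickleK /=.
  have -> : mu (eball (tr q) (ratr rho)) == 0.
    apply/eqP/le_anti; rewrite measure_ge0 andbT -fe.
    apply: le_measure => //; rewrite inE; exact: m_eball.
  rewrite rpos /=; apply/(eballE _ _ rpos); rewrite vsub_sym.
  apply: (le_lt_trans dq); rewrite ltr_pXn2r // ?nnegrE ?ltW // divr_gt0 //.
apply/le_anti; rewrite measure_ge0 andbT.
apply: (le_trans (measure_sigma_subadditive _ mE mS sub)).
by rewrite eseries0.
Qed.

End P7.
Section P8.
Context {R : realType}.

Lemma f00_lb d (umin umax : d.-tuple R) (f : probability (d.-tuple R) R) (r : R) :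
  (0 < d)%N -> (forall i, tnth umin i < tnth umax i) ->
  supp f = box umin umax -> 0 < r ->
  exists2 delta0 : R, 0 < delta0 &
    forall u, box umin umax u -> (delta0%:E <= f (eball u r))%E.
Proof.
move=> d0 ult hs r0.
pose mu : {measure set (d.-tuple R) -> \bar R} := f.
have mule1 : forall A, measurable A -> (mu A <= 1)%E.
  by move=> A mA; exact: (probability_le1 f mA).
pose W := \sum_(i < d) (tnth umax i - tnth umin i).
have wW : forall i, tnth umax i - tnth umin i <= W.
  move=> i; rewrite /W (bigD1 i) //= lerDl; apply: sumr_ge0 => j _.
  by rewrite subr_ge0 ltW.
have W0 : 0 <= W by apply: sumr_ge0 => j _; rewrite subr_ge0 ltW.
pose c := r / (2 * (d%:R + 1)).
have d1 : (0 < d%:R + 1 :> R)%R by rewrite ltr_pwDr // ler0n.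
have c0 : 0 < c by rewrite divr_gt0 // mulr_gt0.
have dc : d%:R * c ^+ 2 < (r / 2) ^+ 2.
  rewrite /c !expr_div_n mulrA ltr_pdivrMr ?exprn_gt0 ?mulr_gt0 //.
  rewrite exprMn.
  have -> : (r ^+ 2 / 2 ^+ 2 * (2 ^+ 2 * (d%:R + 1) ^+ 2) = r ^+ 2 * (d%:R + 1) ^+ 2 :> R)%R.
    by field.
  have dg : (0 <= d%:R :> R)%R by rewrite ler0n.
  have X0 : (0 < r ^+ 2)%R by exact: exprn_gt0.
  nra.
pose N := (Num.trunc (W / c)).+1.
have WN : W < c * N%:R.
  have := truncnS_gt (W / c); rewrite -/N ltr_pdivrMr // mulrC //.
have N0 : (0 < N%:R :> R) by rewrite ltr0n.
pose h i := (tnth umax i - tnth umin i) / N%:R.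
have h0 : forall i, 0 < h i by move=> i; rewrite divr_gt0 // subr_gt0.
have hc : forall i, h i <= c.
  move=> i; rewrite /h ler_pdivrMr //; apply: le_trans (wW i) _.
  by rewrite ltW // mulrC.
pose g (phi : {ffun 'I_d -> 'I_N.+1}) : d.-tuple R :=
  [tuple tnth umin i + (phi i)%:R * h i | i < d].
have gbox : forall phi, box umin umax (g phi).
  move=> phi i; rewrite /g tnth_mktuple; apply/andP; split.
    by rewrite lerDl mulr_ge0 // ?ler0n // ltW.
  have hN : tnth umax i = tnth umin i + N%:R * h i.
    by rewrite /h mulrC divfK ?gt_eqF //; ring.
  rewrite hN lerD2l ler_pM2r // ler_nat; have := ltn_ord (phi i); rewrite ltnS //.
have r20 : 0 < r / 2 by rewrite divr_gt0.
pose v phi := fine (mu (eball (g phi) (r / 2))).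
have vpos : forall phi, 0 < v phi.
  move=> phi; apply: fine_gt0; apply/andP; split.
    have : supp f (g phi) by rewrite hs; exact: gbox.
    by move=> /(_ _ r20).
  by apply: (le_lt_trans (mule1 _ (m_eball _ r20))); rewrite ltry.
pose delta0 := \big[Num.min/1]_(phi : {ffun 'I_d -> 'I_N.+1}) v phi.
exists delta0.
  rewrite /delta0; apply: (big_ind (fun x => 0 < x)) => //.
  all: try by move=> x y x0 y0; rewrite lt_min x0 y0.
  all: try by move=> phi _; exact: vpos.
move=> u uU.
pose j i := Num.trunc ((tnth u i - tnth umin i) / h i).
have xi0 : forall i, 0 <= (tnth u i - tnth umin i) / h i.
  move=> i; have /andP[a1 _] := uU i; apply: divr_ge0; [by rewrite subr_ge0|exact: ltW (h0 i)].
have jN : forall i, (j i < N.+1)%N.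
  move=> i; rewrite ltnS truncn_le_nat.
  apply: (@le_lt_trans _ _ N%:R); last by rewrite ltr_nat.
  rewrite ler_pdivrMr // /h mulrC divfK ?gt_eqF //.
  by rewrite lerD2r; have /andP[_ ->] := uU i.
pose phi := [ffun i => (inord (j i) : 'I_N.+1)].
have phiE : forall i, ((phi i : nat) = j i)%N by move=> i; rewrite ffunE inordK.
have gu : vnorm2 (vsub (g phi) u) < (r / 2) ^+ 2.
  apply: le_lt_trans dc; apply: vnorm2_unif => i.
  rewrite tnth_vsub /g tnth_mktuple phiE.
  have /andP[t1 t2] := truncn_itv (xi0 i).
  rewrite -/(j i) in t1 t2.
  have hi := h0 i.
  rewrite ler_pdivlMr // in t1; rewrite ltr_pdivrMr // in t2.
  rewrite ler_norml; apply/andP; split.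
    rewrite -natr1 in t2; have := hc i; nra.
  have := hc i; nra.
have sub : eball (g phi) (r / 2) `<=` eball u r.
  move=> t /(eballE _ _ r20) ht; apply/(eballE _ _ r0).
  apply: (le_lt_trans (vnorm2_tri t (g phi) u)).
  have : 2 * vnorm2 (vsub t (g phi)) + 2 * vnorm2 (vsub (g phi) u) < 4 * (r / 2) ^+ 2.
    lra.
  by rewrite expr_div_n => H; apply: (lt_le_trans H); rewrite le_eqVlt; apply/orP; left; apply/eqP; field.
change (delta0%:E <= mu (eball u r))%E.
apply: (@le_trans _ _ (mu (eball (g phi) (r / 2)))); last first.
  by apply: le_measure => //; rewrite inE; exact: m_eball.
have fin : mu (eball (g phi) (r / 2)) \is a fin_num.
  rewrite ge0_fin_numE ?measure_ge0 //; apply: (le_lt_trans (mule1 _ (m_eball _ r20))).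
  by rewrite ltry.
rewrite -(fineK fin) lee_fin -/(v phi) /delta0.
exact: bigmin_le.
Qed.

End P8.
Section P9.
Context {R : realType}.
Local Open Scope ereal_scope.

Lemma prob_full d (f : probability (d.-tuple R) R) (U : set (d.-tuple R)) :
  measurable U -> f (~` U) = 0 -> f U = 1.
Proof.
move=> mU h.
have := probability_setC f (measurableC mU); rewrite setCK h => ->.
by rewrite sube0.
Qed.

Lemma prob_null d (f : probability (d.-tuple R) R) (U : set (d.-tuple R)) :
  measurable U -> f U = 1 -> f (~` U) = 0.
Proof. by move=> mU h; rewrite probability_setC // h subee. Qed.

Lemma integral_one d (P : probability (d.-tuple R) R) (h : d.-tuple R -> \bar R) :
  (forall u, h u = 1) -> \int[P]_u h u = 1.
Proof.
move=> H; under eq_integral => u _ do rewrite H.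
have -> : (fun _ : d.-tuple R => (1 : \bar R)) = cst 1 by [].
rewrite integral_cst // mul1e; exact: probability_setT.
Qed.

End P9.
Theorem mainTheorem3 (R : realType) (d : nat) (umin umax : d.-tuple R)
  (sigma tau : R) (f00 : probability (d.-tuple R) R) (r : R) :
  (0 < d)%N ->
  (forall i, tnth umin i < tnth umax i) ->
  0 < sigma -> 0 < tau ->
  supp f00 = box umin umax ->
  0 < r ->
  exists delta : R, 0 < delta /\
  forall (m : nat) (X : set (m.-tuple R)) (Phis : m.-tuple R -> m.-tuple R)
    (Fc : 'M[R]_(m, d)) (nu dt : R) (xref : R -> m.-tuple R)
    (alpha lambda : R) (kbar : nat) (G : probability (d.-tuple R) R)
    (x : nat -> m.-tuple R) (f : nat -> nat -> probability (d.-tuple R) R),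
    (0 < m)%N ->
    (forall y, X y -> X (Phis y)) ->
    0 < nu ->
    \rank ((Fc^T *m Fc + nu%:M)%R) = d ->
    0 < dt ->
    (forall n : nat, X (xref (n%:R * dt))) ->
    0 < alpha -> 0 < lambda -> 0 < lambda * tau < 1 ->
    std_gaussian G ->
    X (x 0%N) ->
    (forall A, f 0%N 0%N A = f00 A) ->
    (forall n k, (k < kbar)%N -> forall A, measurable A ->
       f n k.+1 A =
       (\int[f n k]_u \int[G]_th
          (\1_A (cbo_step (box umin umax) lambda tau sigma
                   (consensus (Lcost Phis Fc nu (x n) (xref ((n.+1)%:R * dt)%R))
                      alpha (f n k)) u th))%:E)%E) ->
    (forall n, x n.+1 = vadd (Phis (x n))
        (mxv Fc (consensus (Lcost Phis Fc nu (x n) (xref ((n.+1)%:R * dt)%R))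
                   alpha (f n kbar)))) ->
    (forall n A, f n.+1 0%N A = f n kbar A) ->
    forall n k, (k <= kbar)%N ->
      (delta%:E <= f n k (eball (argmin_on (box umin umax)
                     (Lcost Phis Fc nu (x n) (xref ((n.+1)%:R * dt)%R))) r))%E.
Proof.
move=> d0 ult s0 t0 hs r0.
have [c0 c0pos hstep] := step_lb d0 ult s0 t0 r0.
have [delta0 dl0pos hf00] := f00_lb d0 ult hs r0.
exists (Num.min c0 delta0); split; first by rewrite lt_min c0pos dl0pos.
move=> m X Phis Fc nu dt xref alpha lambda kbar G x f hm hX hnu hrank hdt hxref
  halpha hlambda hlt hG hx0 hf0 hstepf hx hf1.
have ab : forall i, tnth umin i <= tnth umax i by move=> i; exact: ltW.
have mU := m_box umin umax.
pose L n := Lcost Phis Fc nu (x n) (xref ((n.+1)%:R * dt)%R).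
have fullU : forall n k, (k <= kbar)%N -> f n k (box umin umax) = 1%E.
  have stepU : forall n k, (k < kbar)%N -> f n k.+1 (box umin umax) = 1%E.
    move=> n k hk; rewrite hstepf //.
    apply: integral_one => u; apply: integral_one => th.
    rewrite indicE mem_set //.
    by rewrite /cbo_step projU_box // => i; rewrite /clampt tnth_mktuple; exact: clamp_in.
  elim=> [|n IH] k hk.
    case: k hk => [|k] hk; last exact: stepU.
    rewrite hf0; apply: prob_full => //; exact: supp_null hs.
  case: k hk => [|k] hk; last exact: stepU.
  by rewrite hf1; apply: IH.
have mcB : forall n k, (k <= kbar)%N -> forall i,
    `|tnth (consensus (L n) alpha (f n k)) i| <= `|tnth umin i| + `|tnth umax i|.
  move=> n k hk; apply: (@consensus_bound R d _ mU (f n k) (L n) alpha (fun i => `|tnth umin i| + `|tnth umax i|)).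
  - exact: prob_null (fullU n k hk).
  - exact: m_Lcost.
  - move=> u uU i; have /andP[u1 u2] := uU i.
    rewrite ler_norml; apply/andP; split.
      have := ler_norm (tnth umin i); have := normr_ge0 (tnth umax i).
      have : - tnth umin i <= `|tnth umin i| by rewrite -normrN ler_norm.
      lra.
    have := ler_norm (tnth umax i); have := normr_ge0 (tnth umin i); lra.
  - by move=> i; rewrite addr_ge0.
have stepB : forall n k, (k < kbar)%N -> forall ustar, box umin umax ustar ->
    (c0%:E <= f n k.+1 (eball ustar r))%E.
  move=> n k hk ustar uU; rewrite hstepf //; last exact: m_eball.
  apply: hstep => //.
  - exact: fullU (ltnW hk).
  - exact: mcB (ltnW hk).
have ustarU : forall n, box umin umax (argmin_on (box umin umax) (L n)).
  move=> n; exact: argmin_in_box.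
have minc : ((Num.min c0 delta0)%:E <= c0%:E)%E by rewrite lee_fin ge_min lexx.
have mind : ((Num.min c0 delta0)%:E <= delta0%:E)%E by rewrite lee_fin ge_min lexx orbT.
move=> n k hk.
case: k hk => [|k] hk; last first.
  apply: le_trans minc _; apply: stepB => //; exact: ustarU.
case: n => [|n].
  rewrite hf0; apply: le_trans mind _; apply: hf00; exact: ustarU.
rewrite hf1.
case: kbar hstepf hf1 fullU mcB stepB hk hx => [|kb] hstepf hf1 fullU mcB stepB hk hx; last first.
  apply: le_trans minc _; apply: stepB => //; exact: ustarU.
have f0E : forall n A, f n 0%N A = f00 A.
  by elim=> [|n' IH] A; [exact: hf0|rewrite hf1 IH].
rewrite f0E; apply: le_trans mind _; apply: hf00; exact: ustarU.
Qed.
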